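(* Let $p$ be a prime, $k=\mathbb{F}_p$, and $V$ a $k$-vector space. Then the map $\Psi:\widehat{V}\to V^{**}$, $\Psi((x_{\mathbf{v}})_{\mathbf{v}})=\big(f\mapsto x_{\mathbf{v}_f}\big)$, is an isomorphism, and $\Psi\circ\widehat{\pi}=i$, where $\widehat{\pi}:V\to\widehat V$ is the profinite projection and $i:V\to V^{**}$ is the canonical map $i(v)(f)=f(v)$.
   Context: A finite approximation of a group $G$ is a pair $\mathbf{v}=(F_{\mathbf{v}},\varphi_{\mathbf{v}})$ with $F_{\mathbf{v}}$ a finite group and $\varphi_{\mathbf{v}}:G\to F_{\mathbf{v}}$ a group homomorphism; a morphism $f:\mathbf{v}\to\mathbf{v}'$ is a group homomorphism $f:F_{\mathbf{v}}\to F_{\mathbf{v}'}$ with $f\circ\varphi_{\mathbf{v}}=\varphi_{\mathbf{v}'}$. The profinite completion of $G$ is $\widehat{G}=\{(g_{\mathbf{v}})_{\mathbf{v}}\in\prod_{\mathbf{v}}F_{\mathbf{v}} : \psi(g_{\mathbf{v}})=g_{\mathbf{w}} \text{ for every morphism } \psi:\mathbf{v}\to\mathbf{w}\}$, the product over all finite approximations of $G$ (set-theoretic size issues ignored), with componentwise group law, and the profinite projection is $\widehat{\pi}:G\to\widehat G$, $g\mapsto(\varphi_{\mathbf{v}}(g))_{\mathbf{v}}$. $\widehat{V}$ denotes the profinite completion of the additive group of $V$. For $f\in V^*$, $\mathbf{v}_f=(k,f)$ is the finite approximation of $V$ into the additive group of $k$ given by $f$; for $\mathbf{x}\in\widehat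 V$ the map $f\mapsto x_{\mathbf{v}_f}$ is $k$-linear, so $\Psi$ takes values in $V^{**}$. *)

(* Defs.v *)
From HB Require Import structures.
From mathcomp Require Import all_boot all_order all_algebra all_fingroup.
Set Implicit Arguments. Unset Strict Implicit. Unset Printing Implicit Defensive.
Import GRing.Theory.
Local Open Scope ring_scope.

Record approx (V : zmodType) := Approx {
  aF : finGroupType;
  aphi : V -> aF;
  aphi_morph : forall x y : V, aphi (x + y) = (aphi x * aphi y)%g }.

Definition ghom (G H : finGroupType) (f : G -> H) :=
  forall a b : G, f (a * b)%g = (f a * f b)%g.

Definition amorph (V : zmodType) (v w : approx V) (f : aF v -> aF w) :=
  ghom f /\ (forall x : V, f (aphi v x) = aphi w x).

(* compatible families: the elements of the profinite completion *)
Definition compat (V : zmodType) (x : forall v : approx V, aF v) :=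
  forall (v w : approx V) (f : aF v -> aF w), amorph f -> f (x v) = x w.

Definition profin (V : zmodType) := {x : forall v : approx V, aF v | compat x}.

Lemma compat_mul (V : zmodType) (x y : profin V) :
  compat (fun v => (proj1_sig x v * proj1_sig y v)%g).
Proof.
move=> v w f [hf hc]; rewrite hf.
by rewrite (proj2_sig x _ _ _ (conj hf hc)) (proj2_sig y _ _ _ (conj hf hc)).
Qed.

Definition profin_mul (V : zmodType) (x y : profin V) : profin V :=
  exist _ _ (compat_mul x y).

Lemma compat_pi (V : zmodType) (a : V) : compat (fun v => aphi v a).
Proof. by move=> v w f [_ hc]. Qed.

Definition profin_pi (V : zmodType) (a : V) : profin V :=
  exist _ _ (compat_pi a).

Definition dual (k : fieldType) (V : lmodType k) :=
  {f : V -> k | forall (c : k) (x y : V), f (c *: x + y) = c * f x + f y}.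

(* linear functionals on V^* (elements of V^{**}); the vector space
   operations on V^* are pointwise. *)
Definition bidual_lin (k : fieldType) (V : lmodType k) (phi : dual V -> k) :=
  forall (c : k) (f g h : dual V),
    (forall v, proj1_sig h v = c * proj1_sig f v + proj1_sig g v) ->
    phi h = c * phi f + phi g.

Definition ev (k : fieldType) (V : lmodType k) (v : V) : dual V -> k :=
  fun f => proj1_sig f v.

(* v_f = (k, f): the finite approximation given by f in V^*, with k viewed
   as its (finite) additive group. *)
Section Vf.
Variable p : nat.
Variable V : lmodType 'F_p.

Lemma dual_morph (f : dual V) (x y : V) :
  proj1_sig f (x + y) = (proj1_sig f x * proj1_sig f y)%g.
Proof.
by have := proj2_sig f 1 x y; rewrite scale1r mul1r.
Qed.

Definition vf (f : dual V) : approx V := @Approx V 'F_p (proj1_sig f) (dual_morph f).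

Definition Psi (x : profin V) : dual V -> 'F_p := fun f => proj1_sig x (vf f).
End Vf.

(* Main.v *)
Require Import Defs.
From HB Require Import structures.
From mathcomp Require Import all_boot all_order all_algebra all_fingroup all_solvable.
From mathcomp Require Import mxabelem.
From Stdlib Require Import ClassicalEpsilon FunctionalExtensionality ProofIrrelevance.
Set Implicit Arguments. Unset Strict Implicit. Unset Printing Implicit Defensive.
Import GRing.Theory.
Local Open Scope ring_scope.

Definition pb (P : Prop) : bool := if excluded_middle_informative P then true else false.
Lemma pbP (P : Prop) : reflect P (pb P).
Proof. rewrite /pb; case: excluded_middle_informative => h; by constructor. Qed.

Section Main.
Variable p : nat.
Hypothesis pr : prime p.
Variable V : lmodType 'F_p.

Lemma scaleFp (c : 'F_p) (x : V) : c *: x = x *+ (nat_of_ord c).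
Proof. by rewrite -scaler_nat natr_Zp. Qed.

Lemma aphi0 (v : approx V) : aphi v 0 = 1%g.
Proof.
have h := aphi_morph v 0 0; rewrite addr0 in h.
by apply: (@mulgI _ (aphi v 0)); rewrite -h mulg1.
Qed.

Lemma aphiX (v : approx V) (x : V) n : aphi v (x *+ n) = (aphi v x ^+ n)%g.
Proof. elim: n => [|n IH]; first by rewrite mulr0n aphi0.
by rewrite mulrS aphi_morph IH expgS. Qed.

Definition Sset (v : approx V) : {set aF v} := [set z | pb (exists a, aphi v a = z)].

Lemma SsetP (v : approx V) z : reflect (exists a, aphi v a = z) (z \in Sset v).
Proof. by rewrite inE; apply: pbP. Qed.

Lemma Sset_phi (v : approx V) a : aphi v a \in Sset v.
Proof. by apply/SsetP; exists a. Qed.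

Lemma Sset_group (v : approx V) : group_set (Sset v).
Proof.
apply/group_setP; split; first by rewrite -(aphi0 v) Sset_phi.
move=> x y /SsetP[a <-] /SsetP[b <-]; by rewrite -aphi_morph Sset_phi.
Qed.

Canonical S (v : approx V) := Group (Sset_group v).

Lemma S_abelem (v : approx V) : (p.-abelem (S v))%g.
Proof.
apply/abelemP => //; split.
  apply/centsP => x /SsetP[a <-] y /SsetP[b <-].
  by rewrite /commute -!aphi_morph addrC.
move=> x /SsetP[a <-]; rewrite -aphiX -scaler_nat.
by rewrite (GRing.pcharf0 (pchar_Fp pr)) scale0r aphi0.
Qed.

Definition Ladd (v : approx V) (g : aF v -> 'F_p) :=
  forall a b, a \in S v -> b \in S v -> g (a * b)%g = g a + g b.

Lemma LaddX (v : approx V) g (H : Ladd g) z n : z \in S v -> g (z ^+ n)%g = g z *+ n.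
Proof.
move=> zS; elim: n => [|n IH].
  have h := H 1%g 1%g (group1 _) (group1 _); rewrite mulg1 in h.
  rewrite expg0 mulr0n; apply: (@addrI _ (g 1%g)); by rewrite addr0 -h.
by rewrite expgS H ?groupX // IH mulrS.
Qed.

Lemma dualOf_lin (v : approx V) g (H : Ladd g) (c : 'F_p) (x y : V) :
  g (aphi v (c *: x + y)) = c * g (aphi v x) + g (aphi v y).
Proof.
rewrite aphi_morph H ?Sset_phi // scaleFp aphiX LaddX ?Sset_phi //.
by rewrite -mulr_natl natr_Zp.
Qed.

Definition dualOf (v : approx V) g (H : Ladd g) : dual V :=
  exist _ (fun a => g (aphi v a)) (dualOf_lin H).

Lemma vsub_morph (v : approx V) (x y : V) :
  subg (S v) (aphi v (x + y)) = (subg (S v) (aphi v x) * subg (S v) (aphi v y))%g.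
Proof. by rewrite aphi_morph subgM ?Sset_phi. Qed.

Definition vsub (v : approx V) : approx V := @Approx V (subg_of (S v)) _ (@vsub_morph v).

Lemma sgval_amorph (v : approx V) : amorph (v := vsub v) (w := v) sgval.
Proof. split; first by []. by move=> a /=; rewrite subgK ?Sset_phi. Qed.

Lemma xS (x : profin V) (v : approx V) : proj1_sig x v \in S v.
Proof. by rewrite -(proj2_sig x _ _ _ (sgval_amorph v)) subgP. Qed.

Lemma xL (x : profin V) (v : approx V) g (H : Ladd g) :
  g (proj1_sig x v) = proj1_sig x (vf (dualOf H)).
Proof.
have hm : amorph (v := vsub v) (w := vf (dualOf H)) (fun u => g (sgval u)).
  split.
    move=> a b /=. exact: (H _ _ (subgP a) (subgP b)).
  by move=> a /=; rewrite subgK ?Sset_phi.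
by rewrite -(proj2_sig x _ _ _ hm) -(proj2_sig x _ _ _ (sgval_amorph v)).
Qed.

Lemma Sep (v : approx V) (z z' : aF v) : z \in S v -> z' \in S v ->
  (forall g, Ladd g -> g z = g z') -> z = z'.
Proof.
move=> zS z'S hg.
have [triv|ntE] := eqVneq (gval (S v)) 1%g.
  by move: zS z'S; rewrite triv => /set1gP -> /set1gP ->.
pose rV := abelem_rV (S_abelem v) ntE.
apply: (@abelem_rV_inj _ _ _ (S_abelem v) ntE _ _ zS z'S); apply/rowP => i.
have hL : Ladd (fun w => rV w 0 i).
  by move=> a b aS bS; rewrite /rV abelem_rV_M // mxE.
exact: (hg _ hL).
Qed.

Section Phi.
Variable phi : dual V -> 'F_p.
Hypothesis phiL : bidual_lin phi.

Lemma phi_ext (f g : dual V) : (forall a, proj1_sig f a = proj1_sig g a) -> phi f = phi g.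
Proof.
move=> h; rewrite (phiL (c := 0) (f := f) (g := g) (h := f)) ?mul0r ?add0r //.
by move=> a; rewrite mul0r add0r.
Qed.

Lemma phi_zero (f : dual V) : (forall a, proj1_sig f a = 0) -> phi f = 0.
Proof.
move=> h; have := phiL (c := 1) (f := f) (g := f) (h := f).
rewrite mul1r => e.
have {}e : phi f = phi f + phi f by apply: e => a; rewrite mul1r h addr0.
by apply: (@addrI _ (phi f)); rewrite addr0 -e.
Qed.

Lemma dsum_lin I (r : seq I) (k : I -> 'F_p) (cs : I -> dual V) (c : 'F_p) (x y : V) :
  \sum_(i <- r) k i * proj1_sig (cs i) (c *: x + y) =
  c * \sum_(i <- r) k i * proj1_sig (cs i) x + \sum_(i <- r) k i * proj1_sig (cs i) y.
Proof.
rewrite mulr_sumr -big_split; apply: eq_bigr => i _.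
by rewrite (proj2_sig (cs i)) mulrDr !mulrA [k i * c]mulrC.
Qed.

Definition dsum I (r : seq I) (k : I -> 'F_p) (cs : I -> dual V) : dual V :=
  exist _ (fun a => \sum_(i <- r) k i * proj1_sig (cs i) a) (dsum_lin r k cs).

Lemma phi_sum I (r : seq I) (k : I -> 'F_p) (cs : I -> dual V) (F : dual V) :
  (forall a, proj1_sig F a = \sum_(i <- r) k i * proj1_sig (cs i) a) ->
  phi F = \sum_(i <- r) k i * phi (cs i).
Proof.
elim: r F => [|i r IH] F hF.
  by rewrite big_nil; apply: phi_zero => a; rewrite hF big_nil.
rewrite big_cons -(IH (dsum r k cs)) //.
by apply: phiL => a; rewrite hF big_cons.
Qed.

Lemma Exist (v : approx V) : exists z, z \in S v /\ forall g (H : Ladd g), g z = phi (dualOf H).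
Proof.
have [triv|ntE] := eqVneq (gval (S v)) 1%g.
  exists 1%g; split; first exact: group1.
  move=> g H.
  have g1 : g 1%g = 0.
    have h := H 1%g 1%g (group1 _) (group1 _); rewrite mulg1 in h.
    by apply: (@addrI _ (g 1%g)); rewrite addr0 -h.
  rewrite g1 phi_zero // => a /=.
  by have := Sset_phi v a; rewrite -/(gval (S v)) triv => /set1gP ->.
pose abE := S_abelem v.
pose rV := abelem_rV abE ntE.
pose rVa := rVabelem abE ntE.
have hLi i : Ladd (fun w => rV w 0 i).
  by move=> a b aS bS; rewrite /rV abelem_rV_M // mxE.
pose cs i := dualOf (hLi i).
exists (rVa (\row_i phi (cs i))); split; first exact: mem_rVabelem.
move=> g H.
pose h r := g (rVa r).
have hD : {morph h : r s / r + s}.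
  by move=> r s; rewrite /h /rVa rVabelemD H ?mem_rVabelem.
have h0 : h 0 = 0.
  by apply: (@addrI _ (h 0)); rewrite addr0 -hD addr0.
have hZ c r : h (c *: r) = c * h r.
  by rewrite /h /rVa rVabelemZ LaddX ?mem_rVabelem // -mulr_natl natr_Zp.
have hsum r : h r = \sum_i r 0 i * h (delta_mx 0 i).
  rewrite {1}(row_sum_delta r) (big_morph h hD h0).
  by apply: eq_bigr => i _; rewrite hZ.
rewrite -/(h _) hsum.
rewrite (phi_sum (r := index_enum _) (k := fun i => h (delta_mx 0 i)) (cs := cs)).
  by apply: eq_bigr => i _; rewrite mxE mulrC.
move=> a /=.
rewrite -{1}(@abelem_rV_K _ _ _ abE ntE (aphi v a)) ?Sset_phi // -/rV -/rVa -/(h _) hsum.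
by apply: eq_bigr => i _; rewrite mulrC.
Qed.

End Phi.

Lemma mulgFp (a b : 'F_p) : (a * b)%g = a + b.
Proof. by []. Qed.

Lemma vprod_morph (f g : dual V) (x y : V) :
  ((proj1_sig f (x + y), proj1_sig g (x + y)) : ('F_p * 'F_p)%type)
  = ((proj1_sig f x, proj1_sig g x) * (proj1_sig f y, proj1_sig g y))%g.
Proof. by rewrite !dual_morph. Qed.

Definition vprod (f g : dual V) : approx V :=
  @Approx V ('F_p * 'F_p)%type _ (vprod_morph f g).

Lemma Psi_lin (x : profin V) : bidual_lin (Psi x).
Proof.
move=> c f g h Hh; rewrite /Psi.
have m1 : amorph (v := vprod f g) (w := vf f) fst by [].
have m2 : amorph (v := vprod f g) (w := vf g) snd by [].
have m3 : amorph (v := vprod f g) (w := vf h) (fun u => c * u.1 + u.2).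
  split; last by move=> a /=; rewrite Hh.
  move=> [a1 a2] [b1 b2]; rewrite mulgFp /=.
  change (c * (a1 + b1) + (a2 + b2) = c * a1 + a2 + (c * b1 + b2)).
  by rewrite mulrDr addrACA.
rewrite -(proj2_sig x _ _ _ m1) -(proj2_sig x _ _ _ m2) -(proj2_sig x _ _ _ m3).
by [].
Qed.

Lemma Psi_inj (x y : profin V) : Psi x = Psi y -> x = y.
Proof.
move=> hxy.
have hv : forall v, proj1_sig x v = proj1_sig y v.
  move=> v; apply: (Sep (xS x v) (xS y v)) => g H.
  rewrite (xL x H) (xL y H); exact: (equal_f hxy (dualOf H)).
clear hxy; move: hv; case: x => [x hx]; case: y => [y hy] /= hv.
have e := functional_extensionality_dep _ _ hv; subst y.
by rewrite (proof_irrelevance _ hx hy).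
Qed.

Lemma S_map (v w : approx V) (h : aF v -> aF w) : amorph h -> forall z, z \in S v -> h z \in S w.
Proof. by move=> [hh hc] z /SsetP[a <-]; rewrite hc Sset_phi. Qed.

Lemma Psi_onto (phi : dual V -> 'F_p) : bidual_lin phi -> exists x : profin V, Psi x = phi.
Proof.
move=> phiL.
pose xs v := proj1_sig (constructive_indefinite_description _ (Exist phiL v)).
have xsP v : xs v \in S v /\ forall g (H : Ladd g), g (xs v) = phi (dualOf H).
  exact: (proj2_sig (constructive_indefinite_description _ (Exist phiL v))).
have cx : compat xs.
  move=> v w h hm; have [hh hc] := hm.
  have [xv Hv] := xsP v; have [xw Hw] := xsP w.
  apply: (Sep (S_map hm xv) xw) => g H.
  have H' : Ladd (fun z => g (h z)).
    by move=> a b aS bS; rewrite hh H // S_map.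
  rewrite (Hv _ H') Hw; apply: (phi_ext phiL) => a /=.
  by rewrite hc.
exists (exist _ xs cx); apply: functional_extensionality => f.
rewrite /Psi /=.
have Hid : Ladd (v := vf f) id by [].
have [_ Hf] := xsP (vf f).
rewrite -[xs _]/(id (xs (vf f))) (Hf _ Hid); exact: (phi_ext phiL).
Qed.

End Main.

Theorem mainTheorem4 (p : nat) (V : lmodType 'F_p) :
  prime p ->
  (* Psi takes values in V^{**} *)
  (forall x : profin V, bidual_lin (Psi x)) /\
  (* Psi is a group homomorphism *)
  (forall x y : profin V, Psi (profin_mul x y) = (fun f => Psi x f + Psi y f)) /\
  (* Psi is injective *)
  (forall x y : profin V, Psi x = Psi y -> x = y) /\
  (* Psi is onto V^{**} *)
  (forall phi : dual V -> 'F_p, bidual_lin phi -> exists x : profin V, Psi x = phi) /\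
  (* Psi \o pi_hat = i *)
  (forall v : V, Psi (profin_pi v) = ev v).
Proof.
move=> pr; split; first exact: Psi_lin.
split; first by [].
split; first exact: (@Psi_inj p pr V).
split; first exact: (@Psi_onto p pr V).
by [].
Qed.
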